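(* Let $r\geq 1$ be odd and $m\geq 3$. For every integer $j$ with $1\leq j\leq \frac{2^{rm}-1}{2^{m}-1}-1$, we have $\mathrm{wt}_{rm}((2^m-1)j)\leq rm-m$.
   Context: For an integer $0\le i\le 2^k-1$, $\mathrm{wt}_k(i)$ denotes the number of $1$'s in the binary expansion of $i$. (Here $(2^m-1)j<2^{rm}-1$.) *)

(* Defs.v *)
From mathcomp Require Import all_boot.
Set Implicit Arguments. Unset Strict Implicit. Unset Printing Implicit Defensive.

Definition wt (k i : nat) : nat := \sum_(b < k) odd (i %/ 2 ^ b).

(* Main.v *)
Require Import Defs.
From mathcomp Require Import all_boot.
From mathcomp Require Import zify.

Lemma wtS K n : wt K.+1 n = odd n + wt K (n %/ 2).
Proof.
rewrite /wt big_ord_recl expn0 divn1; congr (_ + _).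
by apply: eq_bigr => i _; rewrite /= expnS divnMA.
Qed.

Lemma wt0n n : wt 0 n = 0.
Proof. by rewrite /wt big_ord0. Qed.

Lemma wtn0 K : wt K 0 = 0.
Proof. elim: K => [|K IH]; first by rewrite wt0n. by rewrite wtS div0n IH. Qed.

Lemma wt_le K n : wt K n <= K.
Proof.
elim: K n => [|K IH] n; first by rewrite wt0n.
rewrite wtS; have := IH (n %/ 2); case: (odd n); lia.
Qed.

Lemma wt_subadd K : forall a b c, c <= 1 -> wt K (a + b + c) <= wt K a + wt K b + c.
Proof.
elim: K => [|K IH] a b c Hc; first by rewrite !wt0n.
rewrite !wtS -!modn2.
have E : (a + b + c) %/ 2 = a %/ 2 + b %/ 2 + (a %% 2 + b %% 2 + c) %/ 2 by lia.
rewrite E; have := IH (a %/ 2) (b %/ 2) ((a %% 2 + b %% 2 + c) %/ 2) ltac:(lia).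
lia.
Qed.

Lemma wt_split m L : forall r0 q, r0 < 2 ^ m ->
  wt (m + L) (r0 + 2 ^ m * q) = wt m r0 + wt L q.
Proof.
elim: m => [|m IH] r0 q Hr.
  rewrite expn0 in Hr; have -> : r0 = 0 by lia.
  by rewrite wt0n mul1n.
rewrite addSn !wtS.
have E : (r0 + 2 ^ m.+1 * q) %/ 2 = r0 %/ 2 + 2 ^ m * q.
  rewrite expnS; lia.
have O : odd (r0 + 2 ^ m.+1 * q) = odd r0.
  by rewrite oddD oddM oddX /= addbF.
rewrite E O IH; first by rewrite addnA.
rewrite expnS in Hr; lia.
Qed.

Lemma wt_small K L n : n < 2 ^ K -> wt (K + L) n = wt K n.
Proof.
move=> H; have := @wt_split K L n 0 H; rewrite muln0 addn0 => ->.
by rewrite wtn0 addn0.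
Qed.

Lemma wt_ones m : wt m (2 ^ m - 1) = m.
Proof.
elim: m => [|m IH]; first by rewrite wt0n.
rewrite wtS.
have E : (2 ^ m.+1 - 1) %/ 2 = 2 ^ m - 1.
  have : 0 < 2 ^ m by rewrite expn_gt0.
  rewrite expnS; lia.
have O : odd (2 ^ m.+1 - 1).
  have P : 0 < 2 ^ m by rewrite expn_gt0.
  rewrite expnS.
  have -> : 2 * 2 ^ m - 1 = (2 ^ m - 1).*2 + 1 by rewrite -muln2; lia.
  by rewrite addn1 /= odd_double.
by rewrite E O IH.
Qed.

Lemma wt_compl K : forall y, y < 2 ^ K -> wt K (2 ^ K - 1 - y) + wt K y = K.
Proof.
elim: K => [|K IH] y Hy; first by rewrite !wt0n.
rewrite !wtS.
have P : 0 < 2 ^ (K) by rewrite expn_gt0.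
have E : (2 ^ K.+1 - 1 - y) %/ 2 = 2 ^ K - 1 - y %/ 2.
  rewrite expnS; rewrite expnS in Hy; lia.
have O : odd (2 ^ K.+1 - 1 - y) + odd y = 1.
  rewrite expnS in Hy *.
  move: (modn2 y) (modn2 (2 * 2 ^ K - 1 - y)).
  case: (odd y); case: (odd (2 * 2 ^ K - 1 - y)) => /=; lia.
rewrite E; have := IH (y %/ 2).
have : y %/ 2 < 2 ^ K by rewrite expnS in Hy; lia.
move=> H /(_ H); lia.
Qed.

Lemma wt_mult m K : 1 <= m -> forall n, 0 < n -> (2 ^ m - 1) %| n -> n < 2 ^ K ->
  m <= wt K n.
Proof.
move=> Hm n; elim: n {-2}n (leqnn n) => [|N IH] n Hn Hpos; first lia.
move=> Hd HK.
have Pm : 0 < 2 ^ m by rewrite expn_gt0.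
have Hm2 : 2 <= 2 ^ m by rewrite -{1}(expn1 2) leq_exp2l //.
have Dp : 0 < 2 ^ m - 1 by lia.
case: (ltnP n (2 ^ m)) => Hlt.
  have En : n = 2 ^ m - 1.
    case/dvdnP: Hd => k Ek; rewrite Ek in Hlt Hpos *.
    have k1 : k <= 1.
      by rewrite -(leq_pmul2r Dp) mul1n; lia.
    have k0 : 0 < k by move: Hpos; rewrite muln_gt0 => /andP[].
    have -> : k = 1 by lia.
    by rewrite mul1n.
  have mK : m <= K by rewrite -(@leq_exp2l 2) //; lia.
  by rewrite En -(subnKC mK) wt_small ?wt_ones //; lia.
have mK : m <= K by rewrite -(@leq_exp2l 2) //; lia.
set q := n %/ 2 ^ m; set r0 := n %% 2 ^ m.
have En : n = r0 + 2 ^ m * q by rewrite /r0 /q addnC mulnC -divn_eq.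
have Hr0 : r0 < 2 ^ m by rewrite ltn_mod.
have Hq : 1 <= q by rewrite /q divn_gt0.
have Hlt' : q + r0 < n.
  have := ltn_Pmull Hm2 Hq; rewrite mulnC; lia.
have Hd' : (2 ^ m - 1) %| q + r0.
  have D : (2 ^ m - 1) %| q * (2 ^ m - 1) by apply: dvdn_mull.
  have Eq : n = (q + r0) + q * (2 ^ m - 1).
    have := leq_pmulr q Pm; rewrite mulnBr muln1 [q * _]mulnC; lia.
  by move: Hd; rewrite Eq dvdn_addl.
have H1 := IH (q + r0) ltac:(lia) ltac:(lia) Hd' ltac:(lia).
have H2 := @wt_subadd K q r0 0 (isT : 0 <= 1); rewrite !addn0 in H2.
have Hn' : wt K n = wt m r0 + wt (K - m) q.
  by rewrite En -{1}(subnKC mK) wt_split.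
have Hr0' : wt K r0 = wt m r0 by rewrite -(subnKC mK) wt_small.
have Hqs : q < 2 ^ (K - m).
  rewrite -(ltn_pmul2l Pm) -expnD subnKC //; lia.
have Hq' : wt K q = wt (K - m) q.
  by rewrite -{1}(subnKC mK) addnC wt_small.
lia.
Qed.

Lemma geom m r : exists M, (2 ^ m - 1) * M = 2 ^ (r * m) - 1.
Proof.
elim: r => [|r [M HM]]; first by exists 0; rewrite mul0n expn0 muln0.
exists (2 ^ m * M + 1).
have P : 0 < 2 ^ (r * m) by rewrite expn_gt0.
have P' : 0 < 2 ^ m by rewrite expn_gt0.
rewrite mulSn expnD mulnDr muln1 mulnCA HM mulnBr muln1.
have := leq_pmulr (2 ^ m) P; lia.
Qed.

Theorem lemma4 (r m j : nat) :
  odd r -> 1 <= r -> 3 <= m ->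
  1 <= j -> j <= (2 ^ (r * m) - 1) %/ (2 ^ m - 1) - 1 ->
  wt (r * m) ((2 ^ m - 1) * j) <= r * m - m.
Proof.
move=> _ _ Hm Hj.
have [M HM] := geom m r.
have Pm : 1 < 2 ^ m by rewrite -{1}(expn0 2) ltn_exp2l //; lia.
rewrite -HM mulKn; last lia.
move=> HjM.
set K := r * m.
have PK : 0 < 2 ^ K by rewrite expn_gt0.
have LjM : (2 ^ m - 1) * j <= (2 ^ m - 1) * M by rewrite leq_mul2l; apply/orP; right; lia.
have LkM : (2 ^ m - 1) * (M - j) <= (2 ^ m - 1) * M by rewrite leq_mul2l; apply/orP; right; lia.
set y := (2 ^ m - 1) * (M - j).
have Ey : (2 ^ m - 1) * j = 2 ^ K - 1 - y.
  rewrite /y /K -HM mulnBr; lia.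
have Hy : y < 2 ^ K by rewrite /y /K; lia.
have := @wt_compl K y Hy; rewrite -Ey => C.
have ypos : 0 < y by rewrite /y muln_gt0; apply/andP; split; lia.
have := @wt_mult m K ltac:(lia) y ypos (dvdn_mulr _ (dvdnn _)) Hy.
lia.
Qed.
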